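(* Let $k\ge2$ and $T_1=\sum_{j=1}^{k-1}(16(k-j)-4)$. Let $e_0=v_1^1v_1^2v_1^3$ and, for $i\in[1,T_1]$, let $s\in[1,k-1]$ be the unique integer with $\sum_{j=1}^{s-1}(16(k-j)-4)<i\le\sum_{j=1}^{s}(16(k-j)-4)$, set $\alpha=i-\sum_{j=1}^{s-1}(16(k-j)-4)\in[1,16(k-s)-4]$, and define - $e_i=v_{2s-1}^1v_{2s-1+\alpha}^2v_1^3$ if $\alpha\in[1,4(k-s)]$; - $e_i=v_{6s-4k-1+\alpha}^1v_{4k-2s-1}^2v_1^3$ if $\alpha\in[4(k-s)+1,8(k-s)]$; - $e_i=v_{4k-2s-1}^1v_{12k-10s-1-\alpha}^2v_1^3$ if $\alpha\in[8(k-s)+1,12(k-s)-2]$; - $e_i=v_{16k-14s-3-\alpha}^1v_{2s+1}^2v_1^3$ if $\alpha\in[12(k-s)-1,16(k-s)-4]$. Then the $3$-graph $H_1=\mathcal{E}\cup\mathcal{F}\cup\{e_0\}$, with vertex set $A_1\cup A_2\cup\{v_1^3\}$, is $(e_i)_{i=0}^{T_1}$-sequential.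
   Context: Let $A_1=\{v^1_1,\dots,v^1_{4k-3}\}$, $A_2=\{v^2_1,\dots,v^2_{4k-3}\}$ be disjoint sets and $v_1^3$ a further vertex. Writing $xyz$ for $\{x,y,z\}$, for $i\in[1,k-1]$ let $\mathcal{E}_{1,i}=\{v_{2i-1}^1v_j^2v_{j+1}^2 : j\in[2i-1,4k-2-2i]\}$, $\mathcal{E}_{2,i}=\{v_j^1v_{j+1}^1v_{4k-1-2i}^2 : j\in[2i-1,4k-2-2i]\}$, $\mathcal{E}_{3,i}=\{v_{4k-1-2i}^1v_j^2v_{j+1}^2 : j\in[2i+1,4k-2-2i]\}$, $\mathcal{E}_{4,i}=\{v_j^1v_{j+1}^1v_{2i+1}^2 : j\in[2i+1,4k-2-2i]\}$, and $\mathcal{E}=\bigcup_{i=1}^{k-1}(\mathcal{E}_{1,i}\cup\mathcal{E}_{2,i}\cup\mathcal{E}_{3,i}\cup\mathcal{E}_{4,i})$. Let $\mathcal{F}=\{v_j^lv_{j+1}^lv_1^3 : j\in[1,4k-4],\ l\in\{1,2\}\}$. The $F_3$-bootstrap process ($F_3=K^3_4$) in the complete $3$-graph on a vertex set $V$ started from $G_0$: $G_i=G_{i-1}\cup\{e : e\notin G_{i-1} \text{ a } 3\text{-subset of } V,\ \exists\, w\in V\setminus e \text{ with the other three } 3\text{-subsets of } e\cup\{w\} \text{ in } G_{i-1}\}$; sets in $G_i\setminus G_{i-1}$ are infected at step $i$; $G_0$ is stationary if $G_1=G_0$. Definition: a $3$-graph $H$ on vertex set $V$ is $(e_i)_{i=0}^T$-sequential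 (for $3$-subsets $e_i$ of $V$ with $e_0\in H$) if (i) the process started from $H$ becomes stationary after $T$ steps and infects only $e_i$ at step $i$ for each $i\in[1,T]$; (ii) $H\setminus\{e_0\}$ is stationary; (iii) the process started from $(H\cup\{e_T\})\setminus\{e_0\}$ infects only $e_{T-i}$ at step $i$ for each $i\in[1,T]$. *)

(* Defs.v *)
From mathcomp Require Import all_boot.
Set Implicit Arguments. Unset Strict Implicit. Unset Printing Implicit Defensive.

Section Bootstrap.
Variable T : finType.

Definition boot_step (V : {set T}) (G : {set {set T}}) : {set {set T}} :=
  G :|: [set e in powerset V | [&& #|e| == 3, e \notin G &
          [exists w in V :\: e,
             [forall f in powerset (w |: e), ((#|f| == 3) && (f != e)) ==> (f \in G)]]]].

Definition boot_iter (V : {set T}) (G0 : {set {set T}}) (i : nat) : {set {set T}} :=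
  iter i (boot_step V) G0.

Definition infected (V : {set T}) (G0 : {set {set T}}) (i : nat) : {set {set T}} :=
  boot_iter V G0 i :\: boot_iter V G0 i.-1.

Definition stationary (V : {set T}) (G : {set {set T}}) : Prop :=
  boot_step V G = G.

Definition sequential (V : {set T}) (H : {set {set T}}) (e : nat -> {set T})
    (Tm : nat) : Prop :=
  [/\ (forall i, i <= Tm -> e i \subset V /\ #|e i| = 3),
      e 0 \in H,
      stationary V (boot_iter V H Tm) /\
      (forall i, 1 <= i <= Tm -> infected V H i = [set e i]),
      stationary V (H :\ e 0) &
      (forall i, 1 <= i <= Tm ->
         infected V ((e Tm |: H) :\ e 0) i = [set e (Tm - i)])].
End Bootstrap.

(* vertices v^l_j (l in {1,2,3}, 1 <= j <= 4k-3) live in 'I_4 * 'I_(4k+1) *)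
Definition vtx (k : nat) : finType := ('I_4 * 'I_(4 * k).+1)%type.
Definition v (k l j : nat) : vtx k := (inord l, inord j).

Definition edge3 (k : nat) (x y z : vtx k) : {set vtx k} := [set x; y; z].

Definition itv (a b : nat) : seq nat := index_iota a b.+1.

Definition A (k l : nat) : {set vtx k} := [set:: [seq v k l j | j <- itv 1 (4 * k - 3)]].
Definition Vset (k : nat) : {set vtx k} := A k 1 :|: A k 2 :|: [set v k 3 1].

Definition E1 k i : {set {set vtx k}} :=
  [set:: [seq edge3 (v k 1 (2*i-1)) (v k 2 j) (v k 2 j.+1) | j <- itv (2*i-1) (4*k-2-2*i)]].
Definition E2 k i : {set {set vtx k}} :=
  [set:: [seq edge3 (v k 1 j) (v k 1 j.+1) (v k 2 (4*k-1-2*i)) | j <- itv (2*i-1) (4*k-2-2*i)]].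
Definition E3 k i : {set {set vtx k}} :=
  [set:: [seq edge3 (v k 1 (4*k-1-2*i)) (v k 2 j) (v k 2 j.+1) | j <- itv (2*i+1) (4*k-2-2*i)]].
Definition E4 k i : {set {set vtx k}} :=
  [set:: [seq edge3 (v k 1 j) (v k 1 j.+1) (v k 2 (2*i+1)) | j <- itv (2*i+1) (4*k-2-2*i)]].

Definition Ecal k : {set {set vtx k}} :=
  \bigcup_(1 <= i < k) (E1 k i :|: E2 k i :|: E3 k i :|: E4 k i).

Definition Fcal k : {set {set vtx k}} :=
  \bigcup_(l <- [:: 1; 2])
    [set:: [seq edge3 (v k l j) (v k l j.+1) (v k 3 1) | j <- itv 1 (4*k-4)]].

Definition e0 k : {set vtx k} := edge3 (v k 1 1) (v k 2 1) (v k 3 1).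

Definition H1 k : {set {set vtx k}} := Ecal k :|: Fcal k :|: [set e0 k].

Definition psum (k s : nat) : nat := \sum_(1 <= j < s.+1) (16 * (k - j) - 4).

Definition T1 (k : nat) : nat := psum k k.-1.

(* the unique s in [1,k-1] with psum (s-1) < i <= psum s (for 1 <= i <= T1) *)
Definition sidx (k i : nat) : nat := (find (fun s => i <= psum k s) (itv 1 k.-1)).+1.

Definition eseq (k i : nat) : {set vtx k} :=
  if i == 0 then e0 k else
  let s := sidx k i in
  let a := i - psum k s.-1 in
  if a <= 4 * (k - s) then edge3 (v k 1 (2*s-1)) (v k 2 (2*s-1+a)) (v k 3 1)
  else if a <= 8 * (k - s) then
    edge3 (v k 1 (6*s + a - 4*k - 1)) (v k 2 (4*k-2*s-1)) (v k 3 1)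
  else if a <= 12 * (k - s) - 2 then
    edge3 (v k 1 (4*k-2*s-1)) (v k 2 (12*k - 10*s - 1 - a)) (v k 3 1)
  else edge3 (v k 1 (16*k - 14*s - 3 - a)) (v k 2 (2*s+1)) (v k 3 1).

(* Main.v *)
Require Import Defs.
From mathcomp Require Import all_boot.
From mathcomp Require Import zify.
Set Implicit Arguments. Unset Strict Implicit. Unset Printing Implicit Defensive.

Definition len k s := 16*(k-s)-4.
Definition ptx k s a := if a <= 4*(k-s) then 2*s-1 else if a <= 8*(k-s) then 6*s + a - 4*k - 1
  else if a <= 12*(k-s)-2 then 4*k-2*s-1 else 16*k-14*s-3-a.
Definition pty k s a := if a <= 4*(k-s) then 2*s-1+a else if a <= 8*(k-s) then 4*k-2*s-1
  else if a <= 12*(k-s)-2 then 12*k-10*s-1-a else 2*s+1.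

Definition PTS k s a x y :=
  (a + 4*s <= 4*k /\ x+1 = 2*s /\ y+1 = 2*s+a) \/
  (4*k < a + 4*s /\ a + 8*s <= 8*k /\ x+4*k+1 = 6*s+a /\ y+2*s+1 = 4*k) \/
  (8*k < a + 8*s /\ a + 12*s + 2 <= 12*k /\ x+2*s+1 = 4*k /\ y+10*s+1+a = 12*k) \/
  (12*k < a + 12*s + 2 /\ a + 16 * s + 4 <= 16 * k /\ x+14*s+3+a = 16*k /\ y = 2*s+1).

Lemma pt_spec k s a : 1 <= s < k -> a <= len k s -> PTS k s a (ptx k s a) (pty k s a).
Proof.
rewrite /len /ptx /pty /PTS => Hs Ha.
case: ifP => H1; first by left; lia.
case: ifP => H2; first by right; left; lia.
case: ifP => H3; first by right; right; left; lia.
by right; right; right; lia.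
Qed.

Definition adj (x y x' y' : nat) :=
  (x = x' /\ (y' = y+1 \/ y = y'+1)) \/ (y = y' /\ (x' = x+1 \/ x = x'+1)).

Ltac dPTS H := case: H => [H|[H|[H|H]]].

Lemma pt_inj k s a s' a' : 1 <= s < k -> 1 <= s' < k -> a <= len k s -> a' <= len k s' ->
  (1 <= a \/ s = 1) -> (1 <= a' \/ s' = 1) ->
  ptx k s a = ptx k s' a' -> pty k s a = pty k s' a' -> s = s' /\ a = a'.
Proof.
move=> Hs Hs' Ha Ha' Ha0 Ha0' Ex Ey.
have H := pt_spec Hs Ha; have H' := pt_spec Hs' Ha'.
rewrite /len in Ha Ha'; rewrite -Ex -Ey in H'.
move: (ptx k s a) (pty k s a) H H' => x y H H'.
dPTS H; dPTS H'; lia.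
Qed.

Lemma pt_adj k s a s' a' : 1 <= s < k -> 1 <= s' < k -> a <= len k s -> a' <= len k s' ->
  (1 <= a \/ s = 1) -> (1 <= a' \/ s' = 1) ->
  adj (ptx k s a) (pty k s a) (ptx k s' a') (pty k s' a') ->
  (s = s' /\ (a' = a + 1 \/ a = a' + 1)) \/ (s' = s + 1 /\ a + 16*s + 4 = 16*k /\ a' = 1)
  \/ (s = s' + 1 /\ a' + 16*s' + 4 = 16*k /\ a = 1).
Proof.
move=> Hs Hs' Ha Ha' Ha0 Ha0'.
have H := pt_spec Hs Ha; have H' := pt_spec Hs' Ha'.
have {Ha} Ha : a + 16*s + 4 <= 16*k by rewrite /len in Ha; lia.
have {Ha'} Ha' : a' + 16*s' + 4 <= 16*k by rewrite /len in Ha'; lia.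
rewrite /adj.
move: (ptx k s a) (pty k s a) (ptx k s' a') (pty k s' a') H H' => x y x' y' H H' HA.
dPTS H; dPTS H'; case: HA => [[? [?|?]]|[? [?|?]]]; lia.
Qed.

Definition vEi k i x y := (x + 1 = 2*i /\ 2*i <= y+1 /\ y + 2*i + 2 <= 4*k) \/
  (x + 2*i + 1 = 4*k /\ 2*i+1 <= y /\ y + 2*i + 2 <= 4*k).
Definition hEi k i x y := (y + 2*i + 1 = 4*k /\ 2*i <= x+1 /\ x + 2*i + 2 <= 4*k) \/
  (y = 2*i+1 /\ 2*i+1 <= x /\ x+2*i+2 <= 4*k).
Definition Eedgei k i x y x' y' :=
  (x = x' /\ y' = y+1 /\ vEi k i x y) \/ (x = x' /\ y = y'+1 /\ vEi k i x y') \/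
  (y = y' /\ x' = x+1 /\ hEi k i x y) \/ (y = y' /\ x = x'+1 /\ hEi k i x' y).

Ltac pick2 := first [left; lia | right; lia].
Ltac pickE := first
  [ left; split; [lia|split;[lia|pick2]]
  | right; left; split; [lia|split;[lia|pick2]]
  | right; right; left; split; [lia|split;[lia|pick2]]
  | right; right; right; split; [lia|split;[lia|pick2]] ].

Lemma pt_pair k s a : 1 <= s < k -> a < len k s ->
  PTS k s a (ptx k s a) (pty k s a) /\ PTS k s (a+1) (ptx k s (a+1)) (pty k s (a+1)).
Proof. move=> Hs Ha; split; apply: pt_spec => //; lia. Qed.

Lemma pt_edge k s a : 1 <= s < k -> a < len k s ->
  Eedgei k s (ptx k s a) (pty k s a) (ptx k s (a+1)) (pty k s (a+1)).
Proof.
move=> Hs Ha; have [H H'] := pt_pair Hs Ha.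
rewrite /len in Ha.
move: (ptx k s a) (pty k s a) (ptx k s (a+1)) (pty k s (a+1)) H H' => x y x' y' H H'.
rewrite /Eedgei /vEi /hEi.
dPTS H; dPTS H'; try (exfalso; lia); pickE.
Qed.

Definition ptpair k s a x y x' y' :=
  (ptx k s a = x /\ pty k s a = y /\ ptx k s (a+1) = x' /\ pty k s (a+1) = y') \/
  (ptx k s a = x' /\ pty k s a = y' /\ ptx k s (a+1) = x /\ pty k s (a+1) = y).

Lemma pt_cover_aux k s a x y x' y' : 1 <= s < k -> a + 16*s + 5 <= 16*k ->
  (forall X Y X' Y', PTS k s a X Y -> PTS k s (a+1) X' Y' ->
     (X = x /\ Y = y /\ X' = x' /\ Y' = y') \/ (X = x' /\ Y = y' /\ X' = x /\ Y' = y)) ->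
  exists a, a < len k s /\ ptpair k s a x y x' y'.
Proof.
move=> Hs Ha H; exists a; have Hl : a < len k s by rewrite /len; lia.
split=> //; have [H1 H2] := pt_pair Hs Hl; exact: H.
Qed.

Lemma pt_cover k i x y x' y' : 1 <= i < k -> Eedgei k i x y x' y' ->
  exists a, a < len k i /\ ptpair k i a x y x' y'.
Proof.
move=> Hi; rewrite /Eedgei /vEi /hEi.
case=> [[? [? [H|H]]]|[[? [? [H|H]]]|[[? [? [H|H]]]|[? [? [H|H]]]]]].
- apply: (@pt_cover_aux _ _ (y+1-2*i)) => //; first lia.
  move=> X Y X' Y' H1 H2; left; dPTS H1; dPTS H2; lia.
- apply: (@pt_cover_aux _ _ (12*k-10*i-2-y)) => //; first lia.
  move=> X Y X' Y' H1 H2; right; dPTS H1; dPTS H2; lia.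
- apply: (@pt_cover_aux _ _ (y'+1-2*i)) => //; first lia.
  move=> X Y X' Y' H1 H2; right; dPTS H1; dPTS H2; lia.
- apply: (@pt_cover_aux _ _ (12*k-10*i-2-y')) => //; first lia.
  move=> X Y X' Y' H1 H2; left; dPTS H1; dPTS H2; lia.
- apply: (@pt_cover_aux _ _ (x+4*k+1-6*i)) => //; first lia.
  move=> X Y X' Y' H1 H2; left; dPTS H1; dPTS H2; lia.
- apply: (@pt_cover_aux _ _ (16*k-14*i-4-x)) => //; first lia.
  move=> X Y X' Y' H1 H2; right; dPTS H1; dPTS H2; lia.
- apply: (@pt_cover_aux _ _ (x'+4*k+1-6*i)) => //; first lia.
  move=> X Y X' Y' H1 H2; right; dPTS H1; dPTS H2; lia.
- apply: (@pt_cover_aux _ _ (16*k-14*i-4-x')) => //; first lia.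
  move=> X Y X' Y' H1 H2; left; dPTS H1; dPTS H2; lia.
Qed.

Lemma psum0 k : psum k 0 = 0.
Proof. by rewrite /psum big_geq. Qed.

Lemma psumS k s : psum k s.+1 = psum k s + (16*(k-s.+1)-4).
Proof. by rewrite /psum big_nat_recr. Qed.

Lemma psum_mono k s t : s <= t -> psum k s <= psum k t.
Proof.
elim: t => [|t IH]; first by rewrite leqn0 => /eqP->.
rewrite leq_eqVlt => /orP[/eqP->//|]; rewrite ltnS => /IH; rewrite psumS; lia.
Qed.

Lemma sidx_spec k m : 2 <= k -> 1 <= m <= T1 k ->
  1 <= sidx k m < k /\ psum k (sidx k m).-1 < m <= psum k (sidx k m).
Proof.
move=> Hk /andP[Hm1 HmT].
rewrite /sidx /itv /index_iota.
set P := (fun s => m <= psum k s).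
have Hsz : size (iota 1 (k.-1.+1 - 1)) = k.-1 by rewrite size_iota; lia.
have hr : has P (iota 1 (k.-1.+1 - 1)).
  apply/hasP; exists k.-1; last by rewrite /P.
  rewrite mem_iota; lia.
have Hlt := hr; rewrite has_find Hsz in Hlt.
have Hf := nth_find 0 hr.
rewrite nth_iota in Hf; last lia.
rewrite /P in Hf.
have Hb := @before_find _ 0 P (iota 1 (k.-1.+1 - 1)).
move: Hlt Hf Hb; set f := find _ _ => Hlt Hf Hb.
split; first lia.
rewrite add1n in Hf; rewrite /= Hf andbT.
case: f Hlt Hf Hb => [|f] Hlt Hf Hb.
  by rewrite psum0.
have := Hb f (ltnSn f); rewrite nth_iota; last lia.
rewrite /P add1n => /negbT; rewrite -ltnNge //.
Qed.

Lemma sidx_uniq k m s : 2 <= k -> 1 <= s < k -> psum k s.-1 < m <= psum k s -> m <= T1 k ->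
  sidx k m = s.
Proof.
move=> Hk Hs Hm HmT.
have Hm' : 1 <= m <= T1 k by lia.
have [H1 H2] := sidx_spec Hk Hm'.
set s' := sidx k m in H1 H2 *.
case: (ltngtP s s') => // Hss.
- have Hl : s <= s'.-1 by lia.
  have := psum_mono k Hl; lia.
- have Hl : s' <= s.-1 by lia.
  have := psum_mono k Hl; lia.
Qed.

Definition sx k m := if m == 0 then 1 else ptx k (sidx k m) (m - psum k (sidx k m).-1).
Definition sy k m := if m == 0 then 1 else pty k (sidx k m) (m - psum k (sidx k m).-1).

Lemma eseqE k m : eseq k m = edge3 (v k 1 (sx k m)) (v k 2 (sy k m)) (v k 3 1).
Proof.
rewrite /eseq /sx /sy /ptx /pty; case: (m == 0) => //=.
by case: ifP => _ //; case: ifP => _ //; case: ifP => _.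
Qed.

Lemma psum_len k s : 1 <= s -> psum k s = psum k s.-1 + len k s.
Proof. by case: s => // s _; rewrite psumS. Qed.

Lemma sig_rep1 k s a : 2 <= k -> 1 <= s < k -> 1 <= a <= len k s ->
  sx k (psum k s.-1 + a) = ptx k s a /\ sy k (psum k s.-1 + a) = pty k s a.
Proof.
move=> Hk Hs Ha.
have Hps := psum_len k (_ : 1 <= s).
have Hmo : psum k s <= T1 k by apply: psum_mono; lia.
have Hsi : sidx k (psum k s.-1 + a) = s.
  apply: sidx_uniq => //; rewrite Hps in Hmo *; lia.
rewrite /sx /sy Hsi; have -> : (psum k s.-1 + a == 0) = false by lia.
by rewrite addKn.
Qed.

Lemma sig_rep k s a : 2 <= k -> 1 <= s < k -> a <= len k s ->
  sx k (psum k s.-1 + a) = ptx k s a /\ sy k (psum k s.-1 + a) = pty k s a.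
Proof.
move=> Hk Hs Ha.
case: (posnP a) => Ha0; last by apply: sig_rep1 => //; lia.
subst a; rewrite addn0.
have HP := pt_spec Hs Ha.
case: (ltnP 1 s) => Hs1.
- have Hs' : 1 <= s.-1 < k by lia.
  have Hl : 1 <= len k s.-1 <= len k s.-1 by rewrite /len; lia.
  have := psum_len k (_ : 1 <= s.-1); move=> -> //; last lia.
  have [-> ->] := sig_rep1 Hk Hs' Hl.
  have HP' := pt_spec Hs' (leqnn _).
  move: HP HP'; rewrite /len.
  move: (ptx k s 0) (pty k s 0) (ptx k s.-1 (16 * (k - s.-1) - 4)) (pty k s.-1 (16 * (k - s.-1) - 4)).
  move=> x y x' y' H H'.
  dPTS H; dPTS H'; lia.
- have -> : s = 1 by lia.
  rewrite psum0 /sx /sy /=.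
  have Hs1' : 1 <= 1 < k by lia.
  have Hl : 0 <= len k 1 by [].
  have := pt_spec Hs1' Hl.
  move: (ptx k 1 0) (pty k 1 0) => x y H; dPTS H; lia.
Qed.

Lemma rep k m : 2 <= k -> m <= T1 k -> exists s a, [/\ 1 <= s < k, a <= len k s,
  (1 <= a \/ s = 1) & m = psum k s.-1 + a].
Proof.
move=> Hk Hm; case: (posnP m) => Hm0.
  by exists 1, 0; rewrite Hm0 psum0; split => //; lia.
have Hm' : 1 <= m <= T1 k by lia.
have [H1 H2] := sidx_spec Hk Hm'.
exists (sidx k m), (m - psum k (sidx k m).-1).
have := psum_len k (_ : 1 <= sidx k m); move=> Hp; rewrite Hp in H2; last lia.
split => //; lia.
Qed.

Lemma rep_lt k m : 2 <= k -> m < T1 k -> exists s a, [/\ 1 <= s < k, a < len k s &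
  m = psum k s.-1 + a].
Proof.
move=> Hk Hm; have [s [a [Hs Ha _ Em]]] := rep Hk (ltnW Hm); subst m.
case: (ltnP a (len k s)) => Hal; first by exists s, a.
have Ea : a = len k s by lia.
case: (ltnP s.+1 k) => Hsk.
- exists s.+1, 0; split => //; first by rewrite /len; lia.
  by rewrite addn0 /= Ea -psum_len //; lia.
- have Es : s = k.-1 by lia.
  move: Hm; rewrite /T1 Ea -psum_len; last lia.
  rewrite Es; lia.
Qed.

Definition Eedge k x y x' y' := exists i, 1 <= i < k /\ Eedgei k i x y x' y'.

Lemma SP_range k m : 2 <= k -> m <= T1 k ->
  [/\ 1 <= sx k m, sx k m <= 4*k-3, 1 <= sy k m & sy k m <= 4*k-3].
Proof.
move=> Hk Hm; have [s [a [Hs Ha _ ->]]] := rep Hk Hm.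
have [-> ->] := sig_rep Hk Hs Ha.
have := pt_spec Hs Ha; rewrite /len in Ha.
move: (ptx k s a) (pty k s a) => x y H; dPTS H; split; lia.
Qed.

Lemma SP_inj k m m' : 2 <= k -> m <= T1 k -> m' <= T1 k ->
  sx k m = sx k m' -> sy k m = sy k m' -> m = m'.
Proof.
move=> Hk Hm Hm'.
have [s [a [Hs Ha Ha0 ->]]] := rep Hk Hm.
have [s' [a' [Hs' Ha' Ha0' ->]]] := rep Hk Hm'.
have [-> ->] := sig_rep Hk Hs Ha; have [-> ->] := sig_rep Hk Hs' Ha'.
move=> E1 E2; have [-> ->] := pt_inj Hs Hs' Ha Ha' Ha0 Ha0' E1 E2; done.
Qed.

Lemma SP_adj k m m' : 2 <= k -> m <= T1 k -> m' <= T1 k ->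
  adj (sx k m) (sy k m) (sx k m') (sy k m') -> m' = m + 1 \/ m = m' + 1.
Proof.
move=> Hk Hm Hm'.
have [s [a [Hs Ha Ha0 ->]]] := rep Hk Hm.
have [s' [a' [Hs' Ha' Ha0' ->]]] := rep Hk Hm'.
have [-> ->] := sig_rep Hk Hs Ha; have [-> ->] := sig_rep Hk Hs' Ha'.
move=> HA; have := pt_adj Hs Hs' Ha Ha' Ha0 Ha0' HA.
case=> [[-> ?]|[[-> [? ->]]|[-> [? ->]]]]; first lia.
- have -> : (s + 1).-1 = s by lia.
  rewrite (psum_len k (_ : 1 <= s)); last lia.
  rewrite /len; lia.
- have -> : (s' + 1).-1 = s' by lia.
  rewrite (psum_len k (_ : 1 <= s')); last lia.
  rewrite /len; lia.
Qed.

Lemma SP_edge k m : 2 <= k -> m < T1 k ->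
  Eedge k (sx k m) (sy k m) (sx k (m+1)) (sy k (m+1)).
Proof.
move=> Hk Hm; have [s [a [Hs Ha ->]]] := rep_lt Hk Hm.
have [-> ->] := sig_rep Hk Hs (ltnW Ha).
have Ha1 : a + 1 <= len k s by lia.
rewrite -addnA; have [-> ->] := sig_rep Hk Hs Ha1.
exists s; split => //; exact: pt_edge.
Qed.

Lemma SP_cover k x y x' y' : 2 <= k -> Eedge k x y x' y' ->
  exists m, m < T1 k /\
  ((sx k m = x /\ sy k m = y /\ sx k (m+1) = x' /\ sy k (m+1) = y') \/
   (sx k m = x' /\ sy k m = y' /\ sx k (m+1) = x /\ sy k (m+1) = y)).
Proof.
move=> Hk [i [Hi HE]].
have [a [Ha HP]] := pt_cover Hi HE.
exists (psum k i.-1 + a); split.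
  have Hmo : psum k i <= T1 k by apply: psum_mono; lia.
  rewrite (psum_len k (_ : 1 <= i)) in Hmo; lia.
have [-> ->] := sig_rep Hk Hi (ltnW Ha).
have Ha1 : a + 1 <= len k i by lia.
rewrite -addnA; have [-> ->] := sig_rep Hk Hi Ha1.
exact: HP.
Qed.

Lemma Eedge_sym k x y x' y' : Eedge k x y x' y' -> Eedge k x' y' x y.
Proof.
case=> i [Hi H]; exists i; split => //; move: H; rewrite /Eedgei.
case=> [[-> [-> H]]|[[-> [-> H]]|[[-> [-> H]]|[-> [-> H]]]]].
- by right; left.
- by left.
- by right; right; right.
- by right; right; left.
Qed.

Lemma Eedge_pt k x y x' y' : 2 <= k -> Eedge k x y x' y' ->
  exists m m', [/\ m <= T1 k, m' <= T1 k, m' = m + 1 \/ m = m' + 1,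
    sx k m = x /\ sy k m = y & sx k m' = x' /\ sy k m' = y'].
Proof.
move=> Hk HE; have [m [Hm [[E1 [E2 [E3 E4]]]|[E1 [E2 [E3 E4]]]]]] := SP_cover Hk HE.
- by exists m, (m+1); split => //; lia.
- by exists (m+1), m; split => //; lia.
Qed.

Lemma Eedge_adj k x y x' y' : Eedge k x y x' y' -> adj x y x' y'.
Proof.
case=> i [Hi H]; move: H; rewrite /Eedgei /adj.
case=> [[-> [-> H]]|[[-> [-> H]]|[[-> [-> H]]|[-> [-> H]]]]]; lia.
Qed.

Lemma no_square k x1 y1 x2 y2 x3 y3 x4 y4 : 2 <= k ->
  Eedge k x1 y1 x2 y2 -> Eedge k x2 y2 x3 y3 -> Eedge k x3 y3 x4 y4 ->
  adj x1 y1 x4 y4 -> (x1 <> x3 \/ y1 <> y3) -> (x2 <> x4 \/ y2 <> y4) -> False.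
Proof.
move=> Hk H12 H23 H34 A14 D13 D24.
have [m1 [m2 [Hm1 Hm2 R12 [X1 Y1] [X2 Y2]]]] := Eedge_pt Hk H12.
have [n2 [m3 [Hn2 Hm3 R23 [X2' Y2'] [X3 Y3]]]] := Eedge_pt Hk H23.
have [n3 [m4 [Hn3 Hm4 R34 [X3' Y3'] [X4 Y4]]]] := Eedge_pt Hk H34.
have E2 : m2 = n2 by apply: (SP_inj Hk) => //; lia.
have E3 : m3 = n3 by apply: (SP_inj Hk) => //; lia.
subst n2 n3.
have A : m4 = m1 + 1 \/ m1 = m4 + 1.
  by apply: (SP_adj Hk) => //; rewrite X1 Y1 X4 Y4.
case: (eqVneq m1 m3) => [E|N13].
  by subst m3; move: D13; rewrite -X1 -X3 -Y1 -Y3; lia.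
case: (eqVneq m2 m4) => [E|N24].
  by subst m4; move: D24; rewrite -X2 -X4 -Y2 -Y4; lia.
lia.
Qed.

Lemma set3E (T : finType) (p q r : T) : [set p; q; r] = p |: (q |: [set r]).
Proof. by apply/setP => t; rewrite !inE orbA. Qed.

Lemma card3 (T : finType) (p q r : T) : p != q -> p != r -> q != r -> #|[set p; q; r]| = 3.
Proof.
move=> pq pr qr; rewrite set3E !cardsU1 cards1 !inE.
by rewrite (negbTE pq) (negbTE pr) (negbTE qr).
Qed.

Lemma set3_mems (T : finType) (p q r p' q' r' : T) : [set p;q;r] = [set p';q';r'] ->
  [/\ p \in [set p';q';r'], q \in [set p';q';r'], r \in [set p';q';r'] &
      [/\ p' \in [set p;q;r], q' \in [set p;q;r] & r' \in [set p;q;r]]].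
Proof.
move=> E; split; last split.
all: first [by rewrite -E !inE eqxx ?orbT | by rewrite E !inE eqxx ?orbT].
Qed.

Lemma set3C12 (T : finType) (p q r : T) : [set p;q;r] = [set q;p;r].
Proof. apply/setP => t; rewrite !inE. by case: (t == p); case: (t == q). Qed.
Lemma set3C23 (T : finType) (p q r : T) : [set p;q;r] = [set p;r;q].
Proof. apply/setP => t; rewrite !inE. by case: (t == r); case: (t == q); rewrite ?orbT. Qed.

Lemma v_inj k l l' j j' : l < 4 -> l' < 4 -> j <= 4*k -> j' <= 4*k ->
  v k l j = v k l' j' -> l = l' /\ j = j'.
Proof.
move=> Hl Hl' Hj Hj'; rewrite /v => -[E1 E2].
have := f_equal (@nat_of_ord _) E1; have := f_equal (@nat_of_ord _) E2.
by rewrite !inordK //; lia.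
Qed.

Lemma mem3v k l j l1 j1 l2 j2 l3 j3 :
  v k l j \in [set v k l1 j1; v k l2 j2; v k l3 j3] ->
  (l < 4 /\ l1 < 4 /\ l2 < 4 /\ l3 < 4 /\ j <= 4*k /\ j1 <= 4*k /\ j2 <= 4*k /\ j3 <= 4*k) ->
  [|| (l == l1) && (j == j1), (l == l2) && (j == j2) | (l == l3) && (j == j3)].
Proof.
rewrite !inE => H ?.
case/orP: H => [/orP[]|] /eqP/v_inj H.
all: case: (H ltac:(lia) ltac:(lia) ltac:(lia) ltac:(lia)) => -> ->; by rewrite !eqxx ?orbT.
Qed.

Lemma v_neq k l l' j j' : l < 4 -> l' < 4 -> j <= 4*k -> j' <= 4*k ->
  (l <> l' \/ j <> j') -> v k l j != v k l' j'.
Proof.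
move=> *; apply/eqP => /v_inj; lia.
Qed.

Lemma card3v k l1 j1 l2 j2 l3 j3 :
  l1 < 4 -> l2 < 4 -> l3 < 4 -> j1 <= 4*k -> j2 <= 4*k -> j3 <= 4*k ->
  (l1 <> l2 \/ j1 <> j2) -> (l1 <> l3 \/ j1 <> j3) -> (l2 <> l3 \/ j2 <> j3) ->
  #|[set v k l1 j1; v k l2 j2; v k l3 j3]| = 3.
Proof. move=> *; apply: card3; apply: v_neq => //. Qed.

Lemma V_dec k u : u \in Vset k -> exists l j, u = v k l j /\
  ((l = 1 \/ l = 2) /\ 1 <= j <= 4*k-3 \/ l = 3 /\ j = 1).
Proof.
rewrite /Vset /A !inE => /orP[/orP[]|/eqP->].
- case/mapP => j; rewrite mem_index_iota => Hj ->; exists 1, j; split => //; lia.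
- case/mapP => j; rewrite mem_index_iota => Hj ->; exists 2, j; split => //; lia.
- by exists 3, 1; split => //; lia.
Qed.

Lemma V_mem k l j : ((l = 1 \/ l = 2) /\ 1 <= j <= 4*k-3 \/ l = 3 /\ j = 1) ->
  v k l j \in Vset k.
Proof.
rewrite /Vset /A !inE => -[[[->|->] Hj]|[-> ->]]; rewrite ?eqxx ?orbT //.
- by apply/orP; left; apply/orP; left; apply/mapP; exists j => //; rewrite mem_index_iota; lia.
- by apply/orP; left; apply/orP; right; apply/mapP; exists j => //; rewrite mem_index_iota; lia.
Qed.

Lemma mem_bigcup_seq (T : finType) (I : eqType) x (r : seq I) (F : I -> {set T}) :
  x \in \big[@setU T/set0]_(i <- r) F i -> exists2 i, i \in r & x \in F i.
Proof.
elim: r => [|i r IH]; first by rewrite big_nil inE.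
rewrite big_cons inE => /orP[H|/IH [j Hj Hx]]; first by exists i; rewrite ?inE ?eqxx.
by exists j; rewrite // inE Hj orbT.
Qed.

Lemma mem_bigcup_seq' (T : finType) (I : eqType) x (r : seq I) (F : I -> {set T}) i :
  i \in r -> x \in F i -> x \in \big[@setU T/set0]_(i <- r) F i.
Proof.
elim: r => [|j r IH]; first by rewrite in_nil.
rewrite inE big_cons inE => /orP[/eqP<- ->//|/IH H /H ->]; by rewrite orbT.
Qed.

Definition Gs k lo hi := Ecal k :|: Fcal k :|: [set:: map (eseq k) (itv lo hi)].

Lemma memEc k e : e \in Ecal k -> exists x y i, 1 <= i < k /\
  ((vEi k i x y /\ e = [set v k 1 x; v k 2 y; v k 2 (y+1)]) \/
   (hEi k i x y /\ e = [set v k 1 x; v k 1 (x+1); v k 2 y])).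
Proof.
rewrite /Ecal => /mem_bigcup_seq [i]; rewrite mem_index_iota => Hi.
rewrite /E1 /E2 /E3 /E4 /edge3 !inE => /orP[/orP[/orP[]|]|];
  case/mapP => j; rewrite mem_index_iota => Hj ->.
- exists (2*i-1), j, i; split => //; left; split; [rewrite /vEi; lia | by rewrite !addn1].
- exists j, (4*k-1-2*i), i; split => //; right; split; [rewrite /hEi; lia | by rewrite !addn1].
- exists (4*k-1-2*i), j, i; split => //; left; split; [rewrite /vEi; lia | by rewrite !addn1].
- exists j, (2*i+1), i; split => //; right; split; [rewrite /hEi; lia | by rewrite !addn1].
Qed.

Lemma memFc k e : e \in Fcal k -> exists l j, (l = 1 \/ l = 2) /\ 1 <= j <= 4*k-4 /\
  e = [set v k l j; v k l (j+1); v k 3 1].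
Proof.
rewrite /Fcal => /mem_bigcup_seq [l]; rewrite !inE => Hl.
case/mapP => j; rewrite mem_index_iota => Hj ->.
exists l, j; rewrite /edge3 !addn1; split => //; lia.
Qed.

Lemma memXc k lo hi e : e \in [set:: map (eseq k) (itv lo hi)] -> exists m, lo <= m <= hi /\
  e = [set v k 1 (sx k m); v k 2 (sy k m); v k 3 1].
Proof.
rewrite inE => /mapP [m]; rewrite mem_index_iota => Hm ->.
by exists m; rewrite eseqE; split => //; lia.
Qed.

Lemma memGc k lo hi e : e \in Gs k lo hi ->
  [\/ e \in Ecal k, e \in Fcal k | e \in [set:: map (eseq k) (itv lo hi)]].
Proof. by rewrite /Gs !inE => /orP[/orP[]|] H; [constructor 1|constructor 2|constructor 3]. Qed.

Ltac seteq E :=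
  let M1 := fresh "M" in let M2 := fresh "M" in let M3 := fresh "M" in
  let M4 := fresh "M" in let M5 := fresh "M" in let M6 := fresh "M" in
  case: (set3_mems E) => M1 M2 M3 [M4 M5 M6];
  move/mem3v: M1 => M1; specialize (M1 ltac:(lia));
  move/mem3v: M2 => M2; specialize (M2 ltac:(lia));
  move/mem3v: M3 => M3; specialize (M3 ltac:(lia));
  move/mem3v: M4 => M4; specialize (M4 ltac:(lia));
  move/mem3v: M5 => M5; specialize (M5 ltac:(lia));
  move/mem3v: M6 => M6; specialize (M6 ltac:(lia));
  rewrite /= ?andbF ?orbF in M1 M2 M3 M4 M5 M6.

Ltac rangeX Hk m :=
  let Hm' := fresh "Hm" in
  match type of Hk with is_true (2 <= ?k) =>
  have Hm' : m <= T1 k by lia end;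
  case: (SP_range Hk Hm') => ? ? ? ?.

Ltac decG H Hk HT :=
  case/memGc: H => [/memEc [X [Y [i [Hi [[HV E]|[HV E]]]]]]
                  | /memFc [l [j [Hl [Hj E]]]] | /memXc [m [Hm E]]].


Section Boot.
Variable T : finType.
Implicit Types (V e f : {set T}) (G : {set {set T}}).

Definition Nset V G := [set e in powerset V | [&& #|e| == 3, e \notin G &
          [exists w in V :\: e,
             [forall f in powerset (w |: e), ((#|f| == 3) && (f != e)) ==> (f \in G)]]]].

Lemma boot_stepE V G : boot_step V G = G :|: Nset V G.
Proof. by []. Qed.

Lemma card3_set e : #|e| = 3 -> exists x y z, [/\ x != y, x != z, y != z & e = [set x;y;z]].
Proof.
rewrite cardE => Hs; have Hu := enum_uniq (mem e).
case Heq: (enum e) Hs Hu => [|x [|y [|z [|t l]]]] //= _.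
rewrite !inE !negb_or => /andP[/andP[xy xz] /andP[yz _]].
exists x, y, z; split => //; apply/setP => u.
by rewrite -mem_enum Heq !inE orbA.
Qed.

Lemma w_in_f V e f w : #|e| = 3 -> w \notin e -> f \subset w |: e -> #|f| = 3 -> f != e -> w \in f.
Proof.
move=> He wn Hf Hc Hne; apply/negPn/negP => wf.
have Hfe : f \subset e.
  apply/subsetP => t tf; have := subsetP Hf t tf; case/setU1P => // E.
  by move: wf; rewrite -E tf.
have : f == e by rewrite eqEcard Hfe He Hc.
by rewrite (negbTE Hne).
Qed.

Lemma NsetP V G e : e \in Nset V G <-> [/\ e \subset V, #|e| = 3, e \notin G &
  exists w, [/\ w \in V, w \notin e & forall f, f \subset w |: e -> w \in f -> #|f| = 3 -> f \in G]].
Proof.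
rewrite inE powersetE; split.
- case/andP => eV /and3P [/eqP c3 eG /exists_inP [w]]; rewrite inE => /andP[we wV] /forall_inP Hf.
  split => //; exists w; split => // f f1 f2 f3.
  have := Hf f; rewrite powersetE f1 f3 eqxx /= => /(_ isT) /implyP; apply.
  by apply/eqP => E; move: we; rewrite -E f2.
- case=> eV c3 eG [w [wV we Hf]]; rewrite eV c3 eqxx eG /=.
  apply/exists_inP; exists w; first by rewrite inE we wV.
  apply/forall_inP => f; rewrite powersetE => fs; apply/implyP => /andP[/eqP fc fne].
  by apply: Hf => //; apply: (@w_in_f V e).
Qed.

Lemma sub_eq3 f (A : {set T}) : f \subset A -> #|A| = 3 -> #|f| = 3 -> f = A.
Proof. by move=> fA cA cf; apply/eqP; rewrite eqEcard fA cA cf. Qed.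

Lemma sub4 f w p q r : f \subset w |: [set p; q; r] -> w \in f -> #|f| = 3 ->
  w != p -> w != q -> w != r -> p != q -> p != r -> q != r ->
  [\/ f = [set w; p; q], f = [set w; p; r] | f = [set w; q; r]].
Proof.
move=> fs wf fc wp wq wr pq pr qr.
have fs' : forall t, t \in f -> [|| t == w, t == p, t == q | t == r].
  by move=> t /(subsetP fs); rewrite !inE -!orbA.
case pf: (p \in f); last first.
  constructor 3; apply: sub_eq3 => //; last exact: card3.
  apply/subsetP => t tf; have := fs' t tf; rewrite !inE.
  case/or4P => /eqP E; rewrite E ?eqxx ?orbT //; by move: pf; rewrite -E tf.
case qf: (q \in f); last first.
  constructor 2; apply: sub_eq3 => //; last exact: card3.
  apply/subsetP => t tf; have := fs' t tf; rewrite !inE.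
  case/or4P => /eqP E; rewrite E ?eqxx ?orbT //; by move: qf; rewrite -E tf.
case rf: (r \in f); last first.
  constructor 1; apply: sub_eq3 => //; last exact: card3.
  apply/subsetP => t tf; have := fs' t tf; rewrite !inE.
  case/or4P => /eqP E; rewrite E ?eqxx ?orbT //; by move: rf; rewrite -E tf.
have : #|w |: [set p; q; r]| <= #|f|.
  apply: subset_leq_card; apply/subsetP => t; rewrite !inE -!orbA.
  by case/or4P => /eqP ->.
rewrite cardsU1 card3 // fc !inE (negbTE wp) (negbTE wq) (negbTE wr) /=; by [].
Qed.
End Boot.

Section Dec.
Variables (k lo hi : nat).
Hypothesis Hk : 2 <= k.
Hypothesis HT : hi <= T1 k.

Lemma DcAA x x' : 1 <= x <= 4*k-3 -> 1 <= x' <= 4*k-3 -> x <> x' ->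
  [set v k 1 x; v k 1 x'; v k 3 1] \in Gs k lo hi -> x' = x + 1 \/ x = x' + 1.
Proof.
move=> H1 H2 H3 H.
decG H Hk HT.
- rewrite /vEi in HV; seteq E; lia.
- rewrite /hEi in HV; seteq E; lia.
- seteq E; lia.
- rangeX Hk m; seteq E; lia.
Qed.

Lemma DcBB y y' : 1 <= y <= 4*k-3 -> 1 <= y' <= 4*k-3 -> y <> y' ->
  [set v k 2 y; v k 2 y'; v k 3 1] \in Gs k lo hi -> y' = y + 1 \/ y = y' + 1.
Proof.
move=> H1 H2 H3 H.
decG H Hk HT.
- rewrite /vEi in HV; seteq E; lia.
- rewrite /hEi in HV; seteq E; lia.
- seteq E; lia.
- rangeX Hk m; seteq E; lia.
Qed.

Lemma DcAB x y : 1 <= x <= 4*k-3 -> 1 <= y <= 4*k-3 ->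
  [set v k 1 x; v k 2 y; v k 3 1] \in Gs k lo hi ->
  exists m, lo <= m <= hi /\ sx k m = x /\ sy k m = y.
Proof.
move=> H1 H2 H.
decG H Hk HT.
- rewrite /vEi in HV; seteq E; exfalso; lia.
- rewrite /hEi in HV; seteq E; exfalso; lia.
- seteq E; exfalso; lia.
- rangeX Hk m; seteq E; exists m; lia.
Qed.

Lemma DAAA x x' x'' : 1 <= x <= 4*k-3 -> 1 <= x' <= 4*k-3 -> 1 <= x'' <= 4*k-3 ->
  x <> x' -> x <> x'' -> x' <> x'' ->
  [set v k 1 x; v k 1 x'; v k 1 x''] \in Gs k lo hi -> False.
Proof.
move=> H1 H2 H3 H4 H5 H6 H.
decG H Hk HT.
- rewrite /vEi in HV; seteq E; lia.
- rewrite /hEi in HV; seteq E; lia.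
- seteq E; lia.
- rangeX Hk m; seteq E; lia.
Qed.

Lemma DBBB x x' x'' : 1 <= x <= 4*k-3 -> 1 <= x' <= 4*k-3 -> 1 <= x'' <= 4*k-3 ->
  x <> x' -> x <> x'' -> x' <> x'' ->
  [set v k 2 x; v k 2 x'; v k 2 x''] \in Gs k lo hi -> False.
Proof.
move=> H1 H2 H3 H4 H5 H6 H.
decG H Hk HT.
- rewrite /vEi in HV; seteq E; lia.
- rewrite /hEi in HV; seteq E; lia.
- seteq E; lia.
- rangeX Hk m; seteq E; lia.
Qed.

Lemma DAAB x x' y : 1 <= x <= 4*k-3 -> 1 <= x' <= 4*k-3 -> 1 <= y <= 4*k-3 -> x <> x' ->
  [set v k 1 x; v k 1 x'; v k 2 y] \in Gs k lo hi -> Eedge k x y x' y.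
Proof.
move=> H1 H2 H3 H4 H.
decG H Hk HT.
- rewrite /vEi in HV; seteq E; exfalso; lia.
- have HV' := HV; rewrite /hEi in HV'; seteq E.
  have -> : y = Y by lia.
  have [[-> ->]|[-> ->]] : (x = X /\ x' = X + 1) \/ (x = X + 1 /\ x' = X) by lia.
  + by exists i; split => //; right; right; left; split => //; split.
  + by exists i; split => //; right; right; right; split => //; split.
- seteq E; exfalso; lia.
- rangeX Hk m; seteq E; exfalso; lia.
Qed.

Lemma DABB x y y' : 1 <= x <= 4*k-3 -> 1 <= y <= 4*k-3 -> 1 <= y' <= 4*k-3 -> y <> y' ->
  [set v k 1 x; v k 2 y; v k 2 y'] \in Gs k lo hi -> Eedge k x y x y'.
Proof.
move=> H1 H2 H3 H4 H.
decG H Hk HT.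
- have HV' := HV; rewrite /vEi in HV'; seteq E.
  have -> : x = X by lia.
  have [[-> ->]|[-> ->]] : (y = Y /\ y' = Y + 1) \/ (y = Y + 1 /\ y' = Y) by lia.
  + by exists i; split => //; left; split => //; split.
  + by exists i; split => //; right; left; split => //; split.
- rewrite /hEi in HV; seteq E; exfalso; lia.
- seteq E; exfalso; lia.
- rangeX Hk m; seteq E; exfalso; lia.
Qed.

Lemma NX m : m <= T1 k -> (m < lo \/ hi < m) ->
  [set v k 1 (sx k m); v k 2 (sy k m); v k 3 1] \notin Gs k lo hi.
Proof.
move=> Hm Hout; apply/negP => H.
case: (SP_range Hk Hm) => ? ? ? ?.
have Hx : 1 <= sx k m <= 4*k-3 by lia.
have Hy : 1 <= sy k m <= 4*k-3 by lia.
have [m' [Hm' [E1 E2]]] := DcAB Hx Hy H.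
have Hm'T : m' <= T1 k by lia.
have := SP_inj Hk Hm'T Hm E1 E2.
lia.
Qed.

Lemma EinG e : e \in Ecal k -> e \in Gs k lo hi.
Proof. by move=> H; rewrite /Gs !inE H. Qed.
Lemma FinG e : e \in Fcal k -> e \in Gs k lo hi.
Proof. by move=> H; rewrite /Gs !inE H orbT. Qed.

Lemma CcA x : 1 <= x -> x + 1 <= 4*k-3 -> [set v k 1 x; v k 1 (x+1); v k 3 1] \in Gs k lo hi.
Proof.
move=> H1 H2; apply: FinG; rewrite /Fcal.
apply: (@mem_bigcup_seq' _ _ _ _ _ 1) => //.
rewrite inE; apply/mapP; exists x; first by rewrite mem_index_iota; lia.
by rewrite /edge3 addn1.
Qed.

Lemma CcB x : 1 <= x -> x + 1 <= 4*k-3 -> [set v k 2 x; v k 2 (x+1); v k 3 1] \in Gs k lo hi.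
Proof.
move=> H1 H2; apply: FinG; rewrite /Fcal.
apply: (@mem_bigcup_seq' _ _ _ _ _ 2) => //.
rewrite inE; apply/mapP; exists x; first by rewrite mem_index_iota; lia.
by rewrite /edge3 addn1.
Qed.

Lemma CcAB m : lo <= m <= hi -> [set v k 1 (sx k m); v k 2 (sy k m); v k 3 1] \in Gs k lo hi.
Proof.
move=> Hm; rewrite /Gs inE; apply/orP; right.
rewrite inE; apply/mapP; exists m; first by rewrite mem_index_iota; lia.
by rewrite eseqE.
Qed.

Lemma CEh i x y : 1 <= i < k -> hEi k i x y -> [set v k 1 x; v k 1 (x+1); v k 2 y] \in Ecal k.
Proof.
move=> Hi HE; rewrite /Ecal.
apply: (@mem_bigcup_seq' _ _ _ _ _ i); first by rewrite mem_index_iota.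
case: HE => [[Hy Hx]|[Hy Hx]].
- have -> : y = 4*k-1-2*i by lia.
  apply/setUP; left; apply/setUP; left; apply/setUP; right.
  rewrite inE; apply/mapP; exists x; first by rewrite mem_index_iota; lia.
  by rewrite /edge3 addn1.
- rewrite Hy; apply/setUP; right.
  rewrite inE; apply/mapP; exists x; first by rewrite mem_index_iota; lia.
  by rewrite /edge3 addn1.
Qed.

Lemma CEv i x y : 1 <= i < k -> vEi k i x y -> [set v k 1 x; v k 2 y; v k 2 (y+1)] \in Ecal k.
Proof.
move=> Hi HE; rewrite /Ecal.
apply: (@mem_bigcup_seq' _ _ _ _ _ i); first by rewrite mem_index_iota.
case: HE => [[Hx Hy]|[Hx Hy]].
- have -> : x = 2*i-1 by lia.
  apply/setUP; left; apply/setUP; left; apply/setUP; left.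
  rewrite inE; apply/mapP; exists y; first by rewrite mem_index_iota; lia.
  by rewrite /edge3 addn1.
- have -> : x = 4*k-1-2*i by lia.
  apply/setUP; left; apply/setUP; right.
  rewrite inE; apply/mapP; exists y; first by rewrite mem_index_iota; lia.
  by rewrite /edge3 addn1.
Qed.

Lemma CEdge x y x' y' : Eedge k x y x' y' ->
  (y = y' /\ [set v k 1 x; v k 1 x'; v k 2 y] \in Gs k lo hi) \/
  (x = x' /\ [set v k 1 x; v k 2 y; v k 2 y'] \in Gs k lo hi).
Proof.
case=> i [Hi]; rewrite /Eedgei.
case=> [[<- [-> H]]|[[<- [-> H]]|[[<- [-> H]]|[<- [-> H]]]]].
- by right; split => //; apply: EinG; apply: CEv H.
- by right; split => //; rewrite set3C23; apply: EinG; apply: CEv H.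
- by left; split => //; apply: EinG; apply: CEh H.
- by left; split => //; rewrite set3C12; apply: EinG; apply: CEh H.
Qed.
End Dec.

Section Core.
Variables (k lo hi : nat).
Hypothesis Hk : 2 <= k.
Hypothesis HT : hi <= T1 k.

Definition Goal (e : {set vtx k}) := lo <= hi /\
  ((hi < T1 k /\ e = eseq k (hi+1)) \/ (0 < lo /\ e = eseq k (lo-1))).

Lemma close_AAB m1 m2 x x' y : lo <= m1 <= hi -> lo <= m2 <= hi ->
  sx k m1 = x -> sy k m1 = y -> sx k m2 = x' -> sy k m2 = y -> (x' = x + 1 \/ x = x' + 1) ->
  [set v k 1 x; v k 1 x'; v k 2 y] \in Gs k lo hi.
Proof.
move=> H1 H2 X1 Y1 X2 Y2 A.
have Hm1 : m1 <= T1 k by lia.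
have Hm2 : m2 <= T1 k by lia.
have : m2 = m1 + 1 \/ m1 = m2 + 1.
  by apply: (SP_adj Hk) => //; rewrite /adj X1 X2 Y1 Y2; lia.
case=> E.
- have Hl : m1 < T1 k by lia.
  rewrite E in X2 Y2.
  have := CEdge lo Hk HT (SP_edge Hk Hl).
  case=> [[_ H]|[E' _]]; first by rewrite -X1 -X2 -Y1.
  lia.
- have Hl : m2 < T1 k by lia.
  rewrite E in X1 Y1.
  have := CEdge lo Hk HT (SP_edge Hk Hl).
  case=> [[_ H]|[E' _]]; first by rewrite -X1 -X2 -Y2 set3C12.
  lia.
Qed.

Lemma close_ABB m1 m2 x y y' : lo <= m1 <= hi -> lo <= m2 <= hi ->
  sx k m1 = x -> sy k m1 = y -> sx k m2 = x -> sy k m2 = y' -> (y' = y + 1 \/ y = y' + 1) ->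
  [set v k 1 x; v k 2 y; v k 2 y'] \in Gs k lo hi.
Proof.
move=> H1 H2 X1 Y1 X2 Y2 A.
have Hm1 : m1 <= T1 k by lia.
have Hm2 : m2 <= T1 k by lia.
have : m2 = m1 + 1 \/ m1 = m2 + 1.
  by apply: (SP_adj Hk) => //; rewrite /adj X1 X2 Y1 Y2; lia.
case=> E.
- have Hl : m1 < T1 k by lia.
  rewrite E in X2 Y2.
  have := CEdge lo Hk HT (SP_edge Hk Hl).
  case=> [[E' _]|[_ H]]; last by rewrite -X1 -Y2 -Y1.
  lia.
- have Hl : m2 < T1 k by lia.
  rewrite E in X1 Y1.
  have := CEdge lo Hk HT (SP_edge Hk Hl).
  case=> [[E' _]|[_ H]]; last by rewrite -X2 -Y1 -Y2 set3C23.
  lia.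
Qed.

Lemma finish m m1 : lo <= m <= hi -> m1 <= T1 k -> (m1 = m + 1 \/ m = m1 + 1) ->
  [set v k 1 (sx k m1); v k 2 (sy k m1); v k 3 1] \notin Gs k lo hi ->
  Goal [set v k 1 (sx k m1); v k 2 (sy k m1); v k 3 1].
Proof.
move=> Hm Hm1 R He.
have Hout : ~ (lo <= m1 <= hi).
  by move=> H; move: He; rewrite (CcAB Hk HT H).
split; first lia.
case: R => E.
- left; split; first lia.
  by rewrite eseqE; have -> : hi + 1 = m1 by lia.
- right; split; first lia.
  by rewrite eseqE; have -> : lo - 1 = m1 by lia.
Qed.

Definition valid l j := (l = 1 \/ l = 2) /\ 1 <= j <= 4*k-3 \/ l = 3 /\ j = 1.

Ltac fsub := apply/subsetP => t; rewrite !inE => /orP[/orP[]|] /eqP ->; rewrite ?inE eqxx ?orbT.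
Ltac fmem := rewrite !inE eqxx ?orbT //.
Ltac fcard := apply: card3v; lia.
Tactic Notation "useF" hyp(Hf) constr(S) ident(H) := have H : S \in Gs k lo hi by (apply: Hf; first [fsub | fmem | fcard]).
Ltac adjE E := let A := fresh "A" in have A := Eedge_adj E; rewrite /adj in A.

Lemma core_sorted lx jx ly jy lz jz lw jw :
  valid lx jx -> valid ly jy -> valid lz jz -> valid lw jw ->
  lx <= ly -> ly <= lz ->
  (lx <> ly \/ jx <> jy) -> (lx <> lz \/ jx <> jz) -> (ly <> lz \/ jy <> jz) ->
  (lw <> lx \/ jw <> jx) -> (lw <> ly \/ jw <> jy) -> (lw <> lz \/ jw <> jz) ->
  [set v k lx jx; v k ly jy; v k lz jz] \notin Gs k lo hi ->
  (forall f : {set vtx k}, f \subset v k lw jw |: [set v k lx jx; v k ly jy; v k lz jz] ->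
     v k lw jw \in f -> #|f| = 3 -> f \in Gs k lo hi) ->
  Goal [set v k lx jx; v k ly jy; v k lz jz].
Proof.
move=> Vx Vy Vz Vw Sxy Syz D1 D2 D3 D4 D5 D6 He Hf.
case: Vx => [[[?|?] ?]|[? ?]]; case: Vy => [[[?|?] ?]|[? ?]];
  case: Vz => [[[?|?] ?]|[? ?]]; case: Vw => [[[?|?] ?]|[? ?]]; subst; try (exfalso; lia).
- useF Hf [set v k 1 jx; v k 1 jy; v k 1 jw] H.
  by have := @DAAA k lo hi Hk HT jx jy jw ltac:(lia) ltac:(lia) ltac:(lia) ltac:(lia) ltac:(lia) ltac:(lia) H.
- useF Hf [set v k 1 jx; v k 1 jy; v k 2 jw] H1.
  useF Hf [set v k 1 jx; v k 1 jz; v k 2 jw] H2.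
  useF Hf [set v k 1 jy; v k 1 jz; v k 2 jw] H3.
  adjE (@DAAB k lo hi Hk HT jx jy jw ltac:(lia) ltac:(lia) ltac:(lia) ltac:(lia) H1).
  adjE (@DAAB k lo hi Hk HT jx jz jw ltac:(lia) ltac:(lia) ltac:(lia) ltac:(lia) H2).
  adjE (@DAAB k lo hi Hk HT jy jz jw ltac:(lia) ltac:(lia) ltac:(lia) ltac:(lia) H3).
  exfalso; lia.
- useF Hf [set v k 1 jx; v k 1 jy; v k 3 1] H1.
  useF Hf [set v k 1 jx; v k 1 jz; v k 3 1] H2.
  useF Hf [set v k 1 jy; v k 1 jz; v k 3 1] H3.
  have A1 := @DcAA k lo hi Hk HT jx jy ltac:(lia) ltac:(lia) ltac:(lia) H1.
  have A2 := @DcAA k lo hi Hk HT jx jz ltac:(lia) ltac:(lia) ltac:(lia) H2.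
  have A3 := @DcAA k lo hi Hk HT jy jz ltac:(lia) ltac:(lia) ltac:(lia) H3.
  exfalso; lia.
- useF Hf [set v k 1 jx; v k 1 jy; v k 1 jw] H.
  by have := @DAAA k lo hi Hk HT jx jy jw ltac:(lia) ltac:(lia) ltac:(lia) ltac:(lia) ltac:(lia) ltac:(lia) H.
- useF Hf [set v k 1 jx; v k 1 jy; v k 2 jw] H1.
  useF Hf [set v k 1 jx; v k 2 jz; v k 2 jw] H2.
  useF Hf [set v k 1 jy; v k 2 jz; v k 2 jw] H3.
  have E1 := @DAAB k lo hi Hk HT jx jy jw ltac:(lia) ltac:(lia) ltac:(lia) ltac:(lia) H1.
  have E2 := @DABB k lo hi Hk HT jx jz jw ltac:(lia) ltac:(lia) ltac:(lia) ltac:(lia) H2.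
  have E3 := @DABB k lo hi Hk HT jy jz jw ltac:(lia) ltac:(lia) ltac:(lia) ltac:(lia) H3.
  adjE E1; exfalso; apply: (no_square Hk E2 E1 (Eedge_sym E3)); rewrite /adj; lia.
- useF Hf [set v k 1 jx; v k 1 jy; v k 3 1] H1.
  useF Hf [set v k 1 jx; v k 2 jz; v k 3 1] H2.
  useF Hf [set v k 1 jy; v k 2 jz; v k 3 1] H3.
  have A := @DcAA k lo hi Hk HT jx jy ltac:(lia) ltac:(lia) ltac:(lia) H1.
  have [m1 [Hm1 [X1 Y1]]] := @DcAB k lo hi Hk HT jx jz ltac:(lia) ltac:(lia) H2.
  have [m2 [Hm2 [X2 Y2]]] := @DcAB k lo hi Hk HT jy jz ltac:(lia) ltac:(lia) H3.
  by move: He; rewrite (close_AAB Hm1 Hm2 X1 Y1 X2 Y2 A).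
- useF Hf [set v k 1 jx; v k 1 jy; v k 1 jw] H.
  by have := @DAAA k lo hi Hk HT jx jy jw ltac:(lia) ltac:(lia) ltac:(lia) ltac:(lia) ltac:(lia) ltac:(lia) H.
- useF Hf [set v k 1 jx; v k 1 jy; v k 2 jw] H1.
  adjE (@DAAB k lo hi Hk HT jx jy jw ltac:(lia) ltac:(lia) ltac:(lia) ltac:(lia) H1).
  exfalso; move: He; case: A => [[E _]|[_ [E|E]]]; first by move=> _; lia.
  + by rewrite E (@CcA k lo hi Hk HT jx ltac:(lia) ltac:(lia)).
  + by rewrite E set3C12 (@CcA k lo hi Hk HT jy ltac:(lia) ltac:(lia)).
- useF Hf [set v k 1 jx; v k 1 jw; v k 2 jy] H1.
  useF Hf [set v k 1 jx; v k 1 jw; v k 2 jz] H2.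
  useF Hf [set v k 1 jw; v k 2 jy; v k 2 jz] H3.
  have E1 := @DAAB k lo hi Hk HT jx jw jy ltac:(lia) ltac:(lia) ltac:(lia) ltac:(lia) H1.
  have E2 := @DAAB k lo hi Hk HT jx jw jz ltac:(lia) ltac:(lia) ltac:(lia) ltac:(lia) H2.
  have E3 := @DABB k lo hi Hk HT jw jy jz ltac:(lia) ltac:(lia) ltac:(lia) ltac:(lia) H3.
  adjE E3; exfalso; apply: (no_square Hk E1 E3 (Eedge_sym E2)); rewrite /adj; lia.
- useF Hf [set v k 2 jy; v k 2 jz; v k 2 jw] H.
  by have := @DBBB k lo hi Hk HT jy jz jw ltac:(lia) ltac:(lia) ltac:(lia) ltac:(lia) ltac:(lia) ltac:(lia) H.
- useF Hf [set v k 2 jy; v k 2 jz; v k 3 1] H1.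
  useF Hf [set v k 1 jx; v k 2 jy; v k 3 1] H2.
  useF Hf [set v k 1 jx; v k 2 jz; v k 3 1] H3.
  have A := @DcBB k lo hi Hk HT jy jz ltac:(lia) ltac:(lia) ltac:(lia) H1.
  have [m1 [Hm1 [X1 Y1]]] := @DcAB k lo hi Hk HT jx jy ltac:(lia) ltac:(lia) H2.
  have [m2 [Hm2 [X2 Y2]]] := @DcAB k lo hi Hk HT jx jz ltac:(lia) ltac:(lia) H3.
  by move: He; rewrite (close_ABB Hm1 Hm2 X1 Y1 X2 Y2 A).
- useF Hf [set v k 1 jx; v k 1 jw; v k 2 jy] H1.
  useF Hf [set v k 1 jw; v k 2 jy; v k 3 1] H2.
  have E := @DAAB k lo hi Hk HT jx jw jy ltac:(lia) ltac:(lia) ltac:(lia) ltac:(lia) H1.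
  have [m [Hm [X Y]]] := @DcAB k lo hi Hk HT jw jy ltac:(lia) ltac:(lia) H2.
  have [m1 [m2 [Hm1 Hm2 R [X1 Y1] [X2 Y2]]]] := Eedge_pt Hk E.
  have Em : m2 = m by apply: (SP_inj Hk) => //; [lia | rewrite X X2 | rewrite Y Y2].
  subst m2; rewrite -X1 -Y1 in He *; apply: (finish (m := m)) => //; lia.
- useF Hf [set v k 1 jx; v k 2 jy; v k 2 jw] H1.
  useF Hf [set v k 1 jx; v k 2 jw; v k 3 1] H2.
  have E := @DABB k lo hi Hk HT jx jy jw ltac:(lia) ltac:(lia) ltac:(lia) ltac:(lia) H1.
  have [m [Hm [X Y]]] := @DcAB k lo hi Hk HT jx jw ltac:(lia) ltac:(lia) H2.
  have [m1 [m2 [Hm1 Hm2 R [X1 Y1] [X2 Y2]]]] := Eedge_pt Hk E.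
  have Em : m2 = m by apply: (SP_inj Hk) => //; [lia | rewrite X X2 | rewrite Y Y2].
  subst m2; rewrite -X1 -Y1 in He *; apply: (finish (m := m)) => //; lia.
- useF Hf [set v k 1 jw; v k 2 jx; v k 2 jy] H1.
  useF Hf [set v k 1 jw; v k 2 jx; v k 2 jz] H2.
  useF Hf [set v k 1 jw; v k 2 jy; v k 2 jz] H3.
  adjE (@DABB k lo hi Hk HT jw jx jy ltac:(lia) ltac:(lia) ltac:(lia) ltac:(lia) H1).
  adjE (@DABB k lo hi Hk HT jw jx jz ltac:(lia) ltac:(lia) ltac:(lia) ltac:(lia) H2).
  adjE (@DABB k lo hi Hk HT jw jy jz ltac:(lia) ltac:(lia) ltac:(lia) ltac:(lia) H3).
  exfalso; lia.
- useF Hf [set v k 2 jx; v k 2 jy; v k 2 jw] H.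
  by have := @DBBB k lo hi Hk HT jx jy jw ltac:(lia) ltac:(lia) ltac:(lia) ltac:(lia) ltac:(lia) ltac:(lia) H.
- useF Hf [set v k 2 jx; v k 2 jy; v k 3 1] H1.
  useF Hf [set v k 2 jx; v k 2 jz; v k 3 1] H2.
  useF Hf [set v k 2 jy; v k 2 jz; v k 3 1] H3.
  have A1 := @DcBB k lo hi Hk HT jx jy ltac:(lia) ltac:(lia) ltac:(lia) H1.
  have A2 := @DcBB k lo hi Hk HT jx jz ltac:(lia) ltac:(lia) ltac:(lia) H2.
  have A3 := @DcBB k lo hi Hk HT jy jz ltac:(lia) ltac:(lia) ltac:(lia) H3.
  exfalso; lia.
- useF Hf [set v k 1 jw; v k 2 jx; v k 2 jy] H1.
  adjE (@DABB k lo hi Hk HT jw jx jy ltac:(lia) ltac:(lia) ltac:(lia) ltac:(lia) H1).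
  exfalso; move: He; case: A => [[_ [E|E]]|[E _]]; last by move=> _; lia.
  + by rewrite E (@CcB k lo hi Hk HT jx ltac:(lia) ltac:(lia)).
  + by rewrite E set3C12 (@CcB k lo hi Hk HT jy ltac:(lia) ltac:(lia)).
- useF Hf [set v k 2 jx; v k 2 jy; v k 2 jw] H.
  by have := @DBBB k lo hi Hk HT jx jy jw ltac:(lia) ltac:(lia) ltac:(lia) ltac:(lia) ltac:(lia) ltac:(lia) H.
Qed.
End Core.

Lemma v_neq_coord k l j l' j' : v k l j != v k l' j' -> l <> l' \/ j <> j'.
Proof.
move=> H; case: (eqVneq l l') => [E|]; last by move/eqP; left.
right => E'; move: H; by rewrite E E' eqxx.
Qed.

Lemma mem3 (T : finType) (t p q r : T) : t \in [set p; q; r] -> t = p \/ t = q \/ t = r.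
Proof. by rewrite !inE => /orP[/orP[]|] /eqP ->; [left|right;left|right;right]. Qed.

Section Main.
Variables (k lo hi : nat).
Hypothesis Hk : 2 <= k.
Hypothesis HT : hi <= T1 k.

Lemma N_fwd e : e \in Nset (Vset k) (Gs k lo hi) -> @Goal k lo hi e.
Proof.
case/NsetP => eV c3 eG [w [wV we Hf]].
have [x [y [z [xy xz yz E]]]] := card3_set c3; subst e.
have /V_dec [lx [jx [Ex Vx]]] : x \in Vset k by apply: (subsetP eV); rewrite !inE eqxx.
have /V_dec [ly [jy [Ey Vy]]] : y \in Vset k by apply: (subsetP eV); rewrite !inE eqxx ?orbT.
have /V_dec [lz [jz [Ez Vz]]] : z \in Vset k by apply: (subsetP eV); rewrite !inE eqxx ?orbT.
have /V_dec [lw [jw [Ew Vw]]] := wV.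
subst x y z w.
move/v_neq_coord: xy => D1; move/v_neq_coord: xz => D2; move/v_neq_coord: yz => D3.
move: we; rewrite !inE !negb_or => /andP[/andP[/v_neq_coord D4 /v_neq_coord D5] /v_neq_coord D6].
move: eG Hf.
case: (leqP lx ly) => Hxy; case: (leqP ly lz) => Hyz; case: (leqP lx lz) => Hxz.
- move=> He Hf; apply: (core_sorted Hk HT Vx Vy Vz Vw) => //; clear -Hxy Hyz Hxz D1 D2 D3 D4 D5 D6; lia.
- by move=> *; exfalso; clear -Hxy Hyz Hxz; lia.
- rewrite set3C23 => He Hf; apply: (core_sorted Hk HT Vx Vz Vy Vw) => //; clear -Hxy Hyz Hxz D1 D2 D3 D4 D5 D6; lia.
- rewrite set3C23 set3C12 => He Hf; apply: (core_sorted Hk HT Vz Vx Vy Vw) => //; clear -Hxy Hyz Hxz D1 D2 D3 D4 D5 D6; lia.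
- rewrite set3C12 => He Hf; apply: (core_sorted Hk HT Vy Vx Vz Vw) => //; clear -Hxy Hyz Hxz D1 D2 D3 D4 D5 D6; lia.
- rewrite set3C12 set3C23 => He Hf; apply: (core_sorted Hk HT Vy Vz Vx Vw) => //; clear -Hxy Hyz Hxz D1 D2 D3 D4 D5 D6; lia.
- by move=> *; exfalso; clear -Hxy Hyz Hxz; lia.
- rewrite set3C12 set3C23 set3C12 => He Hf; apply: (core_sorted Hk HT Vz Vy Vx Vw) => //; clear -Hxy Hyz Hxz D1 D2 D3 D4 D5 D6; lia.
Qed.

Ltac vneq := apply: v_neq; lia.

Lemma N_bwd M N' : M <= T1 k -> lo <= N' <= hi -> (N' = M+1 \/ M = N'+1) -> ~ (lo <= M <= hi) ->
  eseq k M \in Nset (Vset k) (Gs k lo hi).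
Proof.
move=> HM HN R Hout.
have HN' : N' <= T1 k by lia.
case: (SP_range Hk HM) => ? ? ? ?; case: (SP_range Hk HN') => ? ? ? ?.
have EE : Eedge k (sx k M) (sy k M) (sx k N') (sy k N').
  case: R => E.
  - rewrite E; apply: SP_edge => //; lia.
  - rewrite E; apply: Eedge_sym; apply: SP_edge => //; lia.
have A := Eedge_adj EE; rewrite /adj in A.
rewrite eseqE /edge3; apply/NsetP; split.
- apply/subsetP => t /mem3 [->|[->|->]]; apply: V_mem; lia.
- apply: card3v; lia.
- apply: NX => //; lia.
case: (CEdge lo Hk HT EE) => [[EY HE]|[EX HE]].
- exists (v k 1 (sx k N')); split.
  + apply: V_mem; lia.
  + rewrite !inE !negb_or; apply/andP; split; [apply/andP; split|]; vneq.
  move=> f fs wf fc.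
  have n1 : v k 1 (sx k N') != v k 1 (sx k M) by vneq.
  have n2 : v k 1 (sx k N') != v k 2 (sy k M) by vneq.
  have n3 : v k 1 (sx k N') != v k 3 1 by vneq.
  have n4 : v k 1 (sx k M) != v k 2 (sy k M) by vneq.
  have n5 : v k 1 (sx k M) != v k 3 1 by vneq.
  have n6 : v k 2 (sy k M) != v k 3 1 by vneq.
  case: (sub4 fs wf fc n1 n2 n3 n4 n5 n6) => ->.
  + by rewrite set3C12.
  + have [E|E] : sx k N' = sx k M + 1 \/ sx k M = sx k N' + 1 by lia.
    * by rewrite set3C12 E (@CcA k lo hi Hk HT (sx k M)) //; lia.
    * by rewrite E (@CcA k lo hi Hk HT (sx k N')) //; lia.
  + rewrite EY; apply: (@CcAB k lo hi Hk HT N'); lia.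
- exists (v k 2 (sy k N')); split.
  + apply: V_mem; lia.
  + rewrite !inE !negb_or; apply/andP; split; [apply/andP; split|]; vneq.
  move=> f fs wf fc.
  have n1 : v k 2 (sy k N') != v k 1 (sx k M) by vneq.
  have n2 : v k 2 (sy k N') != v k 2 (sy k M) by vneq.
  have n3 : v k 2 (sy k N') != v k 3 1 by vneq.
  have n4 : v k 1 (sx k M) != v k 2 (sy k M) by vneq.
  have n5 : v k 1 (sx k M) != v k 3 1 by vneq.
  have n6 : v k 2 (sy k M) != v k 3 1 by vneq.
  case: (sub4 fs wf fc n1 n2 n3 n4 n5 n6) => ->.
  + by rewrite set3C12 set3C23.
  + rewrite set3C12 EX; apply: (@CcAB k lo hi Hk HT N'); lia.
  + have [E|E] : sy k N' = sy k M + 1 \/ sy k M = sy k N' + 1 by lia.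
    * by rewrite set3C12 E (@CcB k lo hi Hk HT (sy k M)) //; lia.
    * by rewrite E (@CcB k lo hi Hk HT (sy k N')) //; lia.
Qed.

Lemma N_char e : e \in Nset (Vset k) (Gs k lo hi) <-> @Goal k lo hi e.
Proof.
split; first exact: N_fwd.
case=> Hlh [[H1 ->]|[H1 ->]].
- apply: (@N_bwd (hi+1) hi); lia.
- apply: (@N_bwd (lo-1) lo); lia.
Qed.
End Main.

Lemma step_diff (T : finType) (V : {set T}) G : boot_step V G :\: G = Nset V G.
Proof.
rewrite boot_stepE setDUl setDv set0U.
have H : forall e, e \in Nset V G -> e \notin G.
  by move=> e; rewrite inE => /andP[_ /and3P[]].
apply/setP => e; rewrite inE; case eN: (e \in Nset V G); rewrite ?andbT ?andbF //.
by rewrite (H e eN).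
Qed.

Lemma Gs_add k lo hi lo' hi' m :
  (forall j, (lo' <= j <= hi') = ((lo <= j <= hi) || (j == m))) ->
  Gs k lo hi :|: [set eseq k m] = Gs k lo' hi'.
Proof.
move=> Hj; apply/setP => e; rewrite /Gs !inE -!orbA.
case: (e \in Ecal k) => //=; case: (e \in Fcal k) => //=.
apply/idP/idP.
- case/orP => [/mapP [j]|/eqP ->].
  + rewrite mem_index_iota => Hjr ->; apply: map_f; rewrite mem_index_iota.
    have := Hj j; rewrite /= (_ : lo <= j <= hi) //; lia.
  + apply: map_f; rewrite mem_index_iota; have := Hj m; rewrite eqxx orbT; lia.
- case/mapP => j; rewrite mem_index_iota => Hjr ->.
  have Hj' : lo' <= j <= hi' by lia.
  have := Hj j; rewrite Hj' => /esym.
  case/orP => [H|/eqP ->]; last by rewrite eqxx orbT.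
  by apply/orP; left; apply: map_f; rewrite mem_index_iota; lia.
Qed.

Lemma T1_ge k : 2 <= k -> 12 <= T1 k.
Proof.
move=> Hk; have := psum_mono k (_ : 1 <= k.-1); rewrite /T1.
move=> /(_ ltac:(lia)); rewrite (psum_len k (_ : 1 <= 1)) // psum0 /len; lia.
Qed.

Section Fin.
Variable k : nat.
Hypothesis Hk : 2 <= k.

Lemma Nset_char lo hi e : hi <= T1 k -> (e \in Nset (Vset k) (Gs k lo hi)) = 
  [&& lo <= hi & ((hi < T1 k) && (e == eseq k (hi+1))) || ((0 < lo) && (e == eseq k (lo-1)))].
Proof.
move=> HT; apply/idP/idP.
- move/(@N_char k lo hi Hk HT e) => [H1 [[H2 ->]|[H2 ->]]]; by rewrite H1 ?H2 eqxx ?orbT.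
- case/andP => H1 /orP[/andP[H2 /eqP ->]|/andP[H2 /eqP ->]]; apply/(@N_char k lo hi Hk HT _); split => //.
  + by left.
  + by right.
Qed.

Lemma iter_fwd i : i <= T1 k -> boot_iter (Vset k) (Gs k 0 0) i = Gs k 0 i.
Proof.
elim: i => [//|i IH] Hi.
rewrite /boot_iter iterS -/(boot_iter _ _ _) IH; last lia.
rewrite boot_stepE; have -> : Nset (Vset k) (Gs k 0 i) = [set eseq k (i+1)].
  apply/setP => e; rewrite inE Nset_char; last lia.
  have -> : (i < T1 k) by lia.
  by rewrite /= orbF.
apply: Gs_add => j; lia.
Qed.

Lemma iter_rev i : i <= T1 k -> boot_iter (Vset k) (Gs k (T1 k) (T1 k)) i = Gs k (T1 k - i) (T1 k).
Proof.
elim: i => [|i IH] Hi; first by rewrite subn0.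
rewrite /boot_iter iterS -/(boot_iter _ _ _) IH; last lia.
rewrite boot_stepE; have -> : Nset (Vset k) (Gs k (T1 k - i) (T1 k)) = [set eseq k (T1 k - i - 1)].
  apply/setP => e; rewrite inE Nset_char //.
  rewrite ltnn /= (_ : 0 < T1 k - i); last lia.
  by rewrite (_ : T1 k - i <= T1 k) //; lia.
apply: Gs_add => j; lia.
Qed.
End Fin.

Lemma iterS' (T : finType) (V : {set T}) G i : 0 < i ->
  boot_iter V G i = boot_step V (boot_iter V G i.-1).
Proof. by case: i => // i _; rewrite /boot_iter iterS. Qed.

Lemma H1E k : H1 k = Gs k 1 0 :|: [set eseq k 0].
Proof. by apply/setP => e; rewrite /H1 /Gs !inE /= orbF. Qed.

Lemma H1D k : e0 k \notin Gs k 1 0 -> H1 k :\ e0 k = Gs k 1 0.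
Proof.
move=> e0n'; apply/setP => e; rewrite H1E !inE.
case: eqP => [->|_] /=; last by rewrite ?orbF.
by move: e0n'; rewrite /Gs !inE /= ?orbF => /negbTE ->.
Qed.

Opaque Gs.
Theorem lemma3p2 (k : nat) : 2 <= k -> sequential (Vset k) (H1 k) (eseq k) (T1 k).
Proof.
move=> Hk.
have HT0 := T1_ge Hk.
have He0 : eseq k 0 = e0 k by [].
have H1E := H1E k.
have e0n : forall hi, hi <= T1 k -> 0 < hi -> e0 k \notin Gs k hi (T1 k).
  move=> hi Hh Hh0; rewrite -He0 eseqE; apply: NX => //; lia.
have e0n' : e0 k \notin Gs k 1 0.
  rewrite -He0 eseqE; apply: NX => //; lia.
have HG00 : H1 k = Gs k 0 0 by rewrite H1E; apply: Gs_add => j; lia.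
split.
- move=> i Hi; rewrite eseqE; case: (SP_range Hk Hi) => ? ? ? ?; split.
  + apply/subsetP => t /mem3 [->|[->|->]]; apply: V_mem; lia.
  + apply: card3v; lia.
- by rewrite /H1 !inE eqxx orbT.
- split.
  + rewrite /stationary HG00 (iter_fwd Hk) // boot_stepE.
    have -> : Nset (Vset k) (Gs k 0 (T1 k)) = set0.
      by apply/setP => e; rewrite Nset_char // in_set0 ltnn /= ?ltn0 ?andbF.
    by rewrite setU0.
  + move=> i /andP[Hi1 HiT]; rewrite /infected HG00 iterS' // step_diff (iter_fwd Hk); last lia.
    apply/setP => e; rewrite in_set1 Nset_char //; last lia.
    rewrite (_ : i.-1 < T1 k) /=; last lia.
    by rewrite orbF (_ : i.-1 + 1 = i) //; lia.
- have E2 := H1D e0n'.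
  rewrite He0 /stationary E2 boot_stepE.
  have -> : Nset (Vset k) (Gs k 1 0) = set0.
    by apply/setP => e; rewrite Nset_char // in_set0.
  by rewrite setU0.
- have E : (eseq k (T1 k) |: H1 k) :\ e0 k = Gs k (T1 k) (T1 k).
    have e0T : e0 k \notin Gs k (T1 k) (T1 k) by apply: e0n; lia.
    have GA : Gs k 1 0 :|: [set eseq k (T1 k)] = Gs k (T1 k) (T1 k) by apply: Gs_add => j; lia.
    rewrite -GA in e0T *.
    apply/setP => e; rewrite H1E He0 !inE.
    case: (eqVneq e (e0 k)) => [->|ne].
      by move: e0T; rewrite !inE negb_or => /andP[/negbTE -> /negbTE ->].

    by case: (e == eseq k (T1 k)); rewrite /= ?orbT ?orbF.
  move=> i /andP[Hi1 HiT]; rewrite /infected E iterS' // step_diff (iter_rev Hk); last lia.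
  apply/setP => e; rewrite in_set1 Nset_char; last exact: leqnn.
  rewrite ltnn (_ : T1 k - i.-1 <= T1 k) /=; last lia.
  rewrite (_ : 0 < T1 k - i.-1) /=; last lia.
  by have -> : T1 k - i.-1 - 1 = T1 k - i by lia.
exact: Hk.
Qed.
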